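(* Let $m,n\ge0$. (a) For $0\le k,k'\le\min(m,n)$ and any integer $p$ with $\max(k,k')\le p\le m+n-\max(k,k')$, $$\sum_{\substack{i+j=p\\0\le i\le m,\ 0\le j\le n}} c_{m,n,k}(i,j)\,c_{m,n,k'}(m-i,n-j)=(-1)^k\,\delta_{k,k'}\,D(m,n,k).$$ (b) For pairs $(i,j),(i',j')$ with $0\le i,i'\le m$, $0\le j,j'\le n$ and $i+j=i'+j'=p$, $$\sum_{\substack{0\le k\le\min(m,n)\\ k\le p\le m+n-k}}(-1)^k\,C_{m,n,k}(m-i,n-j)\,C_{m,n,k}(i',j')\,D(m,n,k)=\delta_{i,i'}\delta_{j,j'}.$$
   Context: $D(m,n,k)=\binom{m+n-k+1}{k}\binom{m+n-2k}{m-k}$. Let $e,f,h$ be the standard basis of $\mathfrak{sl}(2,\mathbb{C})$. $V(n)$ is the irreducible representation of highest weight $n$ with fixed highest weight vector $\phi_n$; $\{f^i\phi_n\}_{0\le i\le n}$ is a basis, $f^{n+1}\phi_n=0$. $\mathfrak{sl}(2)$ acts on $V(m)\otimes V(n)$ by $X(v\otimes w)=Xv\otimes w+v\otimes Xw$. For $0\le k\le\min(m,n)$, $\phi_{m,n,k}=\sum_{l=0}^{k}(-1)^l\binom{m-l}{k-l}\binom{n-k+l}{l} f^l\phi_m\otimes f^{k-l}\phi_n$; it is a highest weight vector of weight $m+n-2k$ generating a copy of $V(m+n-2k)$ with basis $f^a\phi_{m,n,k}$, $0\le a\le m+n-2k$, and $V(m)\otimes V(n)$ is the direct sum of these copies.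 The coordinates $c_{m,n,k}(i,j)$ are defined by $f^{p-k}\phi_{m,n,k}=\sum_{i+j=p,\,0\le i\le m,\,0\le j\le n} c_{m,n,k}(i,j)\, f^i\phi_m\otimes f^j\phi_n$ for $k\le p\le m+n-k$. The Clebsch–Gordan coefficients $C_{m,n,k}(i,j)$ are defined by $f^i\phi_m\otimes f^j\phi_n=\sum_{k} C_{m,n,k}(i,j)\, f^{i+j-k}\phi_{m,n,k}$, sum over $0\le k\le\min(m,n)$ with $k\le i+j\le m+n-k$. *)

(* Defs.v *)
From HB Require Import structures.
From mathcomp Require Import all_boot all_order all_algebra.
Set Implicit Arguments. Unset Strict Implicit. Unset Printing Implicit Defensive.
Import Order.TTheory GRing.Theory Num.Theory.
Local Open Scope ring_scope.

(* A vector of V(m) (x) V(n) is represented by its coordinate function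
   v : nat -> nat -> rat, where v i j is the coefficient of
   f^i phi_m (x) f^j phi_n; only 0 <= i <= m, 0 <= j <= n are meaningful
   (coordinates outside this range are kept equal to 0 by the operations). *)
Definition tvec := nat -> nat -> rat.

(* Action of f on V(m) (x) V(n):
   f (f^i phi_m (x) f^j phi_n) = f^(i+1) phi_m (x) f^j phi_n + f^i phi_m (x) f^(j+1) phi_n,
   with f^(m+1) phi_m = 0 and f^(n+1) phi_n = 0. *)
Definition tf (m n : nat) (v : tvec) : tvec := fun i j =>
  (if [&& (0 < i)%N, (i <= m)%N & (j <= n)%N] then v i.-1 j else 0) +
  (if [&& (i <= m)%N, (0 < j)%N & (j <= n)%N] then v i j.-1 else 0).

Definition phimnk (m n k : nat) : tvec := fun i j =>
  if [&& (i <= k)%N, (j == k - i)%N, (i <= m)%N & (j <= n)%N]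
  then (-1) ^+ i * ('C(m - i, k - i) * 'C(n - k + i, i))%:R
  else 0.

Definition fpow_phi (m n k a : nat) : tvec := iter a (tf m n) (phimnk m n k).

Definition cmnk (m n k i j : nat) : rat := fpow_phi m n k (i + j - k) i j.

Definition Dmnk (m n k : nat) : rat :=
  ('C(m + n - k + 1, k) * 'C(m + n - 2 * k, m - k))%:R.

(* C : k -> i -> j -> rat are Clebsch-Gordan coefficients for (m,n) iff for all
   0<=i<=m, 0<=j<=n:
   f^i phi_m (x) f^j phi_n = sum_{0<=k<=min(m,n), k<=i+j<=m+n-k} C k i j f^(i+j-k) phi_{m,n,k}
   (equality of all coordinates). *)
Definition is_CG (m n : nat) (C : nat -> nat -> nat -> rat) : Prop :=
  forall i j : nat, (i <= m)%N -> (j <= n)%N ->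
  forall a b : nat, (a <= m)%N -> (b <= n)%N ->
    ((a == i) && (b == j))%:R =
    \sum_(k < (minn m n).+1 | (k <= i + j <= m + n - k)%N)
       C k i j * fpow_phi m n k (i + j - k) a b.

(* Main.v *)
Require Import Defs.
From HB Require Import structures.
From mathcomp Require Import all_boot all_order all_algebra.
From mathcomp Require Import ring lra zify.
Import Order.TTheory GRing.Theory Num.Theory.
Local Open Scope ring_scope.

Definition supp (m n : nat) (v : tvec) :=
  forall i j, ~~ ((i <= m)%N && (j <= n)%N) -> v i j = 0.
Definition lev (L : nat) (v : tvec) := forall i j, (i + j != L)%N -> v i j = 0.

Lemma tf_supp m n v : supp m n (tf m n v).
Proof.
move=> i j H; rewrite /tf.
case: (boolP (i <= m)%N) H => Hi /=; case: (boolP (j <= n)%N) => Hj //= _;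
  by rewrite ?andbF ?addr0.
Qed.

Lemma tf_lev m n L v : lev L v -> lev L.+1 (tf m n v).
Proof.
move=> H i j Hij; rewrite /tf.
case: ifP => [/and3P [Hi _ _]|_]; case: ifP => [/and3P [_ Hj _]|_];
  rewrite ?H ?addr0 //; lia.
Qed.

Lemma phi_supp m n k : supp m n (phimnk m n k).
Proof.
move=> i j H; rewrite /phimnk; case: ifP => // /and4P [_ _ Hi Hj].
by rewrite Hi Hj in H.
Qed.

Lemma phi_lev m n k : lev k (phimnk m n k).
Proof.
move=> i j H; rewrite /phimnk; case: ifP => // /and4P [Hi /eqP Hj _ _]; lia.
Qed.

Lemma fpow_supp m n k a : supp m n (fpow_phi m n k a).
Proof. case: a => [|a]; [exact: phi_supp| exact: tf_supp]. Qed.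

Lemma fpow_lev m n k a : lev (k + a) (fpow_phi m n k a).
Proof.
elim: a => [|a IH]; first by rewrite addn0; apply: phi_lev.
rewrite addnS /fpow_phi iterS; exact: tf_lev.
Qed.

Lemma fpow_big m n k a : (m + n < k + a)%N -> forall i j, fpow_phi m n k a i j = 0.
Proof.
move=> H i j; case: (boolP ((i <= m)%N && (j <= n)%N)) => Hij.
  apply: fpow_lev; case/andP: Hij => *; lia.
exact: fpow_supp.
Qed.
Definition Bf (m n : nat) (u v : tvec) : rat :=
  \sum_(i < m.+1) \sum_(j < n.+1) u i j * v (m - i)%N (n - j)%N.

Lemma tfE m n v i j : (i <= m)%N -> (j <= n)%N ->
  tf m n v i j = (if (0 < i)%N then v i.-1 j else 0) + (if (0 < j)%N then v i j.-1 else 0).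
Proof. by move=> Hi Hj; rewrite /tf Hi Hj !andbT. Qed.

Lemma shift1 m (F : nat -> nat -> rat) :
  \sum_(i < m.+1) (if (0 < i)%N then F i.-1 (m - i)%N else 0) =
  \sum_(i < m.+1) (if (0 < m - i)%N then F i (m - i).-1 else 0).
Proof.
rewrite big_ord_recl /= add0r big_ord_recr /= subnn /= addr0.
apply: eq_bigr => i _ /=. rewrite /bump /= add1n /=.
have -> : (0 < m - i)%N by have := ltn_ord i; lia.
congr F; lia.
Qed.

Lemma rev_sum m (F : nat -> rat) :
  \sum_(i < m.+1) F i = \sum_(i < m.+1) F (m - i)%N.
Proof.
rewrite -(big_mkord xpredT F) big_rev_mkord subn0.
by apply: eq_bigr => i _; rewrite subSS.
Qed.

Lemma Bf_sym m n u v : Bf m n u v = Bf m n v u.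
Proof.
rewrite /Bf (rev_sum m (fun i => \sum_(j < n.+1) u i j * v (m - i)%N (n - j)%N)).
apply: eq_bigr => i _.
rewrite (rev_sum n (fun j => u (m - i)%N j * v (m - (m - i))%N (n - j)%N)).
apply: eq_bigr => j _.
have := ltn_ord i; have := ltn_ord j => Hj Hi.
by rewrite mulrC !subKn //; lia.
Qed.

Lemma Bf_tf m n u v : Bf m n (tf m n u) v = Bf m n u (tf m n v).
Proof.
rewrite /Bf.
have E1 : forall i : 'I_m.+1, \sum_(j < n.+1) tf m n u i j * v (m - i)%N (n - j)%N =
  \sum_(j < n.+1) (if (0 < i)%N then u i.-1 j * v (m - i)%N (n - j)%N else 0) +
  \sum_(j < n.+1) (if (0 < j)%N then u i j.-1 * v (m - i)%N (n - j)%N else 0).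
  move=> i; rewrite -big_split; apply: eq_bigr => j _.
  have Hi : (i <= m)%N by rewrite -ltnS.
  have Hj : (j <= n)%N by rewrite -ltnS.
  rewrite (tfE _ _ _ _ _ Hi Hj) mulrDl.
  by congr (_ + _); case: ifP; rewrite ?mul0r.
have E2 : forall i : 'I_m.+1, \sum_(j < n.+1) u i j * tf m n v (m - i)%N (n - j)%N =
  \sum_(j < n.+1) (if (0 < m - i)%N then u i j * v (m - i).-1 (n - j)%N else 0) +
  \sum_(j < n.+1) (if (0 < n - j)%N then u i j * v (m - i)%N (n - j).-1 else 0).
  move=> i; rewrite -big_split; apply: eq_bigr => j _.
  rewrite (tfE _ _ _ _ _ (leq_subr _ _) (leq_subr _ _)) mulrDr.
  by congr (_ + _); case: ifP; rewrite ?mulr0.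
rewrite (eq_bigr _ (fun i _ => E1 i)) (eq_bigr _ (fun i _ => E2 i)) !big_split /=.
congr (_ + _).
  rewrite exchange_big [RHS]exchange_big; apply: eq_bigr => j _.
  exact: (shift1 m (fun i i' => u i j * v i' (n - j)%N)).
apply: eq_bigr => i _.
exact: (shift1 n (fun j j' => u i j * v (m - i)%N j')).
Qed.

Lemma Bf_iter m n a u v :
  Bf m n (iter a (tf m n) u) v = Bf m n u (iter a (tf m n) v).
Proof.
elim: a u v => [//|a IH] u v.
by rewrite iterSr IH Bf_tf -iterS.
Qed.

Definition te (m n : nat) (v : tvec) : tvec := fun i j =>
  if (i <= m)%N && (j <= n)%N then
    (i%:R + 1) * (m%:R - i%:R) * v i.+1 j + (j%:R + 1) * (n%:R - j%:R) * v i j.+1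
  else 0.

Lemma cA m n v i j : (i <= m)%N -> (j <= n)%N ->
  (i%:R + 1) * (m%:R - i%:R) * tf m n v i.+1 j =
  (i%:R + 1) * (m%:R - i%:R) * (v i j + (if (0 < j)%N then v i.+1 j.-1 else 0)) :> rat.
Proof.
move=> Hi Hj; move: Hi; rewrite leq_eqVlt => /orP [/eqP ->|Hlt]; first by rewrite subrr !mulr0 !mul0r.
by rewrite tfE.
Qed.

Lemma cB m n v i j : (i <= m)%N -> (j <= n)%N ->
  (j%:R + 1) * (n%:R - j%:R) * tf m n v i j.+1 =
  (j%:R + 1) * (n%:R - j%:R) * ((if (0 < i)%N then v i.-1 j.+1 else 0) + v i j) :> rat.
Proof.
move=> Hi Hj; move: Hj; rewrite leq_eqVlt => /orP [/eqP ->|Hlt]; first by rewrite subrr !mulr0 !mul0r.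
by rewrite tfE.
Qed.

Lemma comm_ef m n v i j : supp m n v ->
  te m n (tf m n v) i j =
  tf m n (te m n v) i j + (m%:R + n%:R - 2 * (i + j)%:R) * v i j.
Proof.
move=> Hs; rewrite {1}/te.
case: (boolP ((i <= m)%N && (j <= n)%N)) => [/andP [Hi Hj]|H]; last first.
  rewrite Hs // mulr0 addr0 /tf.
  case/nandP: H => /negbTE H; by rewrite ?H ?andbF ?addr0.
rewrite cA // cB // tfE //.
case: i Hi => [|i] Hi; case: j Hj => [|j] Hj /=.
all: rewrite /te; repeat (rewrite ifT; last by apply/andP; split; lia).
all: ring.
Qed.

Lemma binid a b i j :
  (i.+1 * a * 'C(a.-1, j) * 'C(b, i.+1) = j.+1 * b * 'C(a, j.+1) * 'C(b.-1, i))%N.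
Proof.
have E1 := mul_bin_diag a j. have E2 := mul_bin_diag b i.
transitivity ((i.+1 * 'C(b, i.+1)) * (a * 'C(a.-1, j)))%N; first ring.
rewrite E1 -E2; ring.
Qed.

Lemma te_phi m n k : (k <= m)%N -> (k <= n)%N ->
  forall i j, te m n (phimnk m n k) i j = 0.
Proof.
move=> Hkm Hkn i j; rewrite /te.
case: ifP => // /andP [Hi Hj]; rewrite /phimnk.
case: (boolP ((i + j).+1 == k)) => Hk; last first.
  rewrite !ifF ?mulr0 ?addr0 //; apply/negbTE; apply/negP => /and4P [? /eqP ? ? ?];
  move/negP: Hk; apply; apply/eqP; lia.
move/eqP: Hk => Hk.
rewrite [in X in _ + X]ifT; last by apply/and4P; split; [lia|apply/eqP; lia|lia|lia].
move: Hi; rewrite leq_eqVlt => /orP [/eqP Him|Him].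
  subst i; rewrite subrr !mulr0 mul0r add0r subnn.
  have -> : (k - m = j.+1)%N by lia.
  by rewrite bin0n /= mul0n mulr0 mulr0.
rewrite ifT; last by apply/and4P; split; [lia|apply/eqP; lia|lia|lia].
have -> : (k - i.+1 = j)%N by lia.
have -> : (k - i = j.+1)%N by lia.
have -> : (n - k + i.+1 = n - j)%N by lia.
have -> : (n - k + i = (n - j).-1)%N by lia.
have -> : (m - i.+1 = (m - i).-1)%N by lia.
rewrite -!natrB; [|lia|lia].
have B := binid (m - i) (n - j) i j.
rewrite exprS.
have -> : ((i%:R + 1) * (m - i)%:R = (i.+1 * (m - i))%:R :> rat) by rewrite natrM -natr1.
have -> : ((j%:R + 1) * (n - j)%:R = (j.+1 * (n - j))%:R :> rat) by rewrite natrM -natr1.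
set s := (-1) ^+ i : rat.
rewrite mulrCA -!natrM mulnA B !natrM.
ring.
Qed.

Lemma tf_scale m n (c : rat) (v w : tvec) : (forall i j, w i j = c * v i j) ->
  forall i j, tf m n w i j = c * tf m n v i j.
Proof. move=> H i j; rewrite /tf !H; case: ifP; case: ifP => _ _; ring. Qed.

Lemma th_lev m n k a i j :
  (m%:R + n%:R - 2 * (i + j)%:R) * fpow_phi m n k a i j =
  (m%:R + n%:R - 2 * k%:R - 2 * a%:R) * fpow_phi m n k a i j :> rat.
Proof.
case: (boolP (i + j == k + a)%N) => [/eqP ->|H]; last by rewrite fpow_lev // !mulr0.
rewrite natrD; ring.
Qed.

Lemma fpowS m n k a : fpow_phi m n k a.+1 = tf m n (fpow_phi m n k a).
Proof. by rewrite /fpow_phi iterS. Qed.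

Lemma te_fpow m n k : (k <= m)%N -> (k <= n)%N -> forall a i j,
  te m n (fpow_phi m n k a.+1) i j =
  (a.+1%:R * (m%:R + n%:R - 2 * k%:R - a%:R)) * fpow_phi m n k a i j.
Proof.
move=> Hkm Hkn a; elim: a => [|a IH] i j.
  rewrite fpowS comm_ef; last exact: phi_supp.
  rewrite (@tf_scale m n 0 (phimnk m n k) (te m n (phimnk m n k))); last by move=> *; rewrite te_phi // mul0r.
  have := th_lev m n k 0 i j; rewrite /fpow_phi /= => ->.
  ring.
rewrite fpowS comm_ef; last exact: fpow_supp.
rewrite (@tf_scale m n (a.+1%:R * (m%:R + n%:R - 2 * k%:R - a%:R)) (fpow_phi m n k a) (te m n (fpow_phi m n k a.+1))); last exact: IH.
rewrite -fpowS th_lev.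
ring.
Qed.

Lemma fpow_zero m n k : (k <= m)%N -> (k <= n)%N -> forall a,
  (m + n - 2 * k < a)%N -> forall i j, fpow_phi m n k a i j = 0.
Proof.
move=> Hkm Hkn.
suff H : forall t a, (m + n < k + a + t)%N -> (m + n - 2 * k < a)%N ->
  forall i j, fpow_phi m n k a i j = 0.
  by move=> a Ha; apply: (H (m + n).+1) => //; lia.
elim=> [|t IH] a H1 H2 i j.
  apply: fpow_big; lia.
have Z : forall i j, fpow_phi m n k a.+1 i j = 0 by apply: IH; lia.
have := te_fpow m n k Hkm Hkn a i j.
have Hc : (a.+1%:R * (m%:R + n%:R - 2 * k%:R - a%:R) : rat) != 0.
  rewrite mulf_neq0 // ?pnatr_eq0 //.
  have : ((m + n)%N%:R < (2 * k + a)%N%:R :> rat) by rewrite ltr_nat; lia.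
  rewrite !natrD => L; apply/eqP => E; lra.
rewrite /te !Z !mulr0 addr0; case: ifP => _ E;
  by apply: (mulfI Hc); rewrite mulr0 E.
Qed.

Lemma binM N a b : (b <= a)%N ->
  ('C(N, a) * 'C(a, b) = 'C(N, b) * 'C(N - b, a - b))%N.
Proof.
move=> Hba; case: (leqP a N) => HaN; last first.
  rewrite bin_small // mul0n; case: (leqP b N) => HbN.
    by rewrite (bin_small (n := (N - b)%N)) ?muln0 //; lia.
  by rewrite bin_small.
have P : (0 < b`! * (a - b)`! * (N - a)`!)%N by rewrite !muln_gt0 !fact_gt0.
apply/eqP; rewrite -(eqn_pmul2r P); apply/eqP.
transitivity N`!.
  rewrite -(bin_fact HaN) -(bin_fact Hba).
  ring.
rewrite -(bin_fact (leq_trans Hba HaN)).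
rewrite -(bin_fact (m := (a - b)%N) (n := (N - b)%N)); last by lia.
have -> : (N - b - (a - b) = N - a)%N by lia.
ring.
Qed.

Definition Asum (r k : nat) : rat :=
  \sum_(l < k.+1) (-1) ^+ l * ('C(r + l, l) * 'C(r, k - l))%:R.

Lemma Asum0 k : Asum 0 k = (-1) ^+ k.
Proof.
rewrite /Asum big_ord_recr /= big1 ?add0r.
  by rewrite add0n binn subnn bin0 muln1 mulr1.
move=> i _; rewrite bin0n.
have -> : (k - i == 0)%N = false by have := ltn_ord i; lia.
by rewrite muln0 mulr0.
Qed.

Lemma AsumS r k : Asum r.+1 k = Asum r k.
Proof.
case: k => [|k]; first by rewrite /Asum !big_ord_recr !big_ord0 /= !bin0.
pose a' (l : nat) : rat := (-1) ^+ l * 'C(r.+1 + l, l)%:R.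
pose b (j : nat) : rat := 'C(r, j)%:R.
pose M (k : nat) := \sum_(l < k.+1) a' l * b (k - l)%N.
have C1 : Asum r.+1 k.+1 = M k.+1 + M k.
  rewrite /Asum /M big_ord_recr [X in _ = X + _]big_ord_recr /=.
  rewrite -addrA [X in _ = _ + X]addrC addrA; congr (_ + _); last first.
    by rewrite subnn /a' /b !bin0 muln1 mulr1.
  rewrite -big_split /=; apply: eq_bigr => i _.
  have Hi := ltn_ord i.
  rewrite subSn // binS /a' /b !natrM natrD; ring.
have C2 : Asum r k.+1 = M k.+1 + M k.
  rewrite /Asum /M big_ord_recl [X in _ = X + _]big_ord_recl /= -addrA.
  congr (_ + _).
    by rewrite /a' /b !subn0 !bin0 !expr0 !mul1r mul1n.
  rewrite -big_split /=; apply: eq_bigr => i _.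
  rewrite /bump /= !add1n subSS /a' /b.
  have -> : (r + i.+1 = (r + i).+1)%N by rewrite addnS.
  have -> : (r.+1 + i.+1 = (r + i).+2)%N by lia.
  have -> : (r.+1 + i = (r + i).+1)%N by lia.
  rewrite (binS (r + i).+1 i) natrD !natrM exprS; ring.
by rewrite C1 C2.
Qed.

Lemma Asum_val r k : Asum r k = (-1) ^+ k.
Proof. elim: r => [|r IH]; [exact: Asum0| by rewrite AsumS]. Qed.

Lemma Hsum c b k :
  (\sum_(l < k.+1) 'C(c + (k - l), k - l) * 'C(b + l, l) = 'C(c + b + k + 1, k))%N.
Proof.
elim: c k => [|c IHc] k.
  rewrite add0n (eq_bigr (fun i : 'I_k.+1 => 'C(b + i, i))); last by move=> i _; rewrite binn mul1n.
  elim: k => [|k IH]; first by rewrite big_ord_recr big_ord0 /= !bin0.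
  rewrite big_ord_recr /= IH.
  have -> : (b + k.+1 + 1 = (b + k + 1).+1)%N by lia.
  by rewrite binS addn1 addnC addnS.
elim: k => [|k IH]; first by rewrite big_ord_recr big_ord0 /= !bin0.
rewrite big_ord_recr /= subnn addn0 bin0 mul1n.
have E : forall i : 'I_k.+1, ('C(c.+1 + (k.+1 - i), k.+1 - i) * 'C(b + i, i) =
   'C(c + (k.+1 - i), k.+1 - i) * 'C(b + i, i) + 'C(c.+1 + (k - i), k - i) * 'C(b + i, i))%N.
  move=> i; have Hi := ltn_ord i.
  rewrite subSn // -mulnDl; congr (_ * _)%N.
  have -> : (c.+1 + (k - i).+1 = (c.+1 + (k - i)).+1)%N by lia.
  rewrite binS; congr (_ + _)%N; congr 'C(_, _); lia.
rewrite (eq_bigr _ (fun i _ => E i)) big_split /= IH.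
have := IHc k.+1; rewrite big_ord_recr /= subnn addn0 bin0 mul1n => H2.
rewrite addnAC H2.
have -> : (c.+1 + b + k.+1 + 1 = (c + b + k.+1 + 1).+1)%N by lia.
rewrite binS; congr (_ + _)%N; congr 'C(_, _); lia.
Qed.

Lemma pick_ord n j0 (F : nat -> rat) : (j0 < n)%N -> (forall j, j != j0 -> F j = 0) ->
  \sum_(j < n) F j = F j0.
Proof.
move=> Hj HF; rewrite (bigD1 (Ordinal Hj)) //= big1 ?addr0 // => j Hj'.
apply: HF; apply: contra Hj' => /eqP E; apply/eqP/val_inj => /=; exact: E.
Qed.

Lemma red_phi m n k (G : nat -> nat -> rat) : (k <= m)%N -> (k <= n)%N ->
  \sum_(i < m.+1) \sum_(j < n.+1) phimnk m n k i j * G i j =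
  \sum_(l < k.+1) phimnk m n k l (k - l)%N * G l (k - l)%N.
Proof.
move=> Hkm Hkn.
rewrite (big_ord_widen m.+1 (fun l => phimnk m n k l (k - l)%N * G l (k - l)%N)) //.
rewrite [RHS]big_mkcond; apply: eq_bigr => i _.
case: ifP => Hi.
  rewrite (@pick_ord n.+1 (k - i)%N (fun j => phimnk m n k i j * G i j)) //; first lia.
  move=> j Hj; rewrite phi_lev ?mul0r //; apply/eqP => E; move/eqP: Hj; apply; lia.
apply: big1 => j _; rewrite phi_lev ?mul0r //; apply/eqP => E; move/negbT: Hi; lia.
Qed.

Lemma phival m n k l : (k <= m)%N -> (k <= n)%N -> (l <= k)%N ->
  phimnk m n k l (k - l)%N = (-1) ^+ l * ('C(m - l, k - l) * 'C(n - k + l, l))%:R.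
Proof.
move=> Hkm Hkn Hl; rewrite /phimnk ifT //; apply/and4P; split => //; lia.
Qed.

Definition dk (k : nat) : tvec := fun i j => ((i == 0%N) && (j == k))%:R.

Lemma fpow_dk m n k a : (k <= n)%N -> forall i j,
  iter a (tf m n) (dk k) i j =
  if [&& (i + j == k + a)%N, (i <= m)%N & (j <= n)%N] then ('C(a, i))%:R else 0.
Proof.
move=> Hkn; elim: a => [|a IH] i j.
  rewrite /= /dk addn0; case: i => [|i] /=.
    by case: eqP => // ->; rewrite Hkn.
  by rewrite bin0n /=; case: ifP.
rewrite iterS /tf !IH.
case: i => [|i]; case: j => [|j] /=; repeat (case: ifP => ?); rewrite ?add0r ?addr0 ?bin0 //; try lia.
  rewrite binS (@bin_small a i.+1) ?add0n //; lia.
by rewrite binS natrD addrC.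
Qed.

Lemma binT m n k l : (k <= m)%N -> (k <= n)%N -> (l <= k)%N ->
  ('C(m - l, k - l) * 'C(n - k + l, l) * 'C(m + n - 2 * k, m - l) =
   'C(m + n - 2 * k, m - k) * ('C(n - k + l, l) * 'C(n - k, k - l)))%N.
Proof.
move=> Hkm Hkn Hl.
have H : (m - k <= m - l)%N by lia.
have B := binM (m + n - 2 * k) (m - l) (m - k) H.
have E1 : (m + n - 2 * k - (m - k) = n - k)%N by lia.
have E2 : (m - l - (m - k) = k - l)%N by lia.
rewrite E1 E2 in B.
have S : 'C(m - l, k - l) = 'C(m - l, m - k) by rewrite -(bin_sub H) E2.
rewrite S.
transitivity ('C(n - k + l, l) * ('C(m + n - 2 * k, m - l) * 'C(m - l, m - k)))%N; first ring.
rewrite B; ring.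
Qed.

Lemma sign2 l : (-1) ^+ l * (-1) ^+ l = 1 :> rat.
Proof. by rewrite -exprMn mulrNN mulr1 expr1n. Qed.

Lemma psi0 m n k : (k <= m)%N -> (k <= n)%N ->
  fpow_phi m n k (m + n - 2 * k)%N m (n - k)%N = (-1) ^+ k * 'C(m + n - 2 * k, m - k)%:R.
Proof.
move=> Hkm Hkn.
set L := (m + n - 2 * k)%N.
have E1 : Bf m n (dk k) (fpow_phi m n k L) = fpow_phi m n k L m (n - k)%N.
  rewrite /Bf (@pick_ord m.+1 0 (fun i => \sum_(j < n.+1) dk k i j * fpow_phi m n k L (m - i)%N (n - j)%N)) //.
    rewrite (@pick_ord n.+1 k (fun j => dk k 0 j * fpow_phi m n k L (m - 0)%N (n - j)%N)) //; last first.
      by move=> j Hj; rewrite /dk (negbTE Hj) andbF mul0r.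
    by rewrite /dk !eqxx mul1r subn0.
  move=> i Hi; apply: big1 => j _; by rewrite /dk (negbTE Hi) mul0r.
rewrite -E1 /fpow_phi -Bf_iter Bf_sym.
have := red_phi m n k (fun i j => iter L (tf m n) (dk k) (m - i)%N (n - j)%N) Hkm Hkn.
rewrite /Bf /= => ->.
rewrite (eq_bigr (fun l : 'I_k.+1 => 'C(L, m - k)%:R *
   ((-1) ^+ l * ('C(n - k + l, l) * 'C(n - k, k - l))%:R))); last first.
  move=> l _; have Hl : (l <= k)%N by rewrite -ltnS.
  rewrite phival // fpow_dk //; rewrite ifT; last lia.
  by rewrite -mulrA -natrM binT // natrM mulrCA.
rewrite -mulr_sumr; have := Asum_val (n - k) k; rewrite /Asum => ->.
by rewrite mulrC.
Qed.

Lemma alt m n k : (k <= m)%N -> (k <= n)%N -> forall l, (l <= k)%N ->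
  fpow_phi m n k (m + n - 2 * k)%N (m - l)%N (n - k + l)%N =
  (-1) ^+ l * fpow_phi m n k (m + n - 2 * k)%N m (n - k)%N.
Proof.
move=> Hkm Hkn.
have Z := fpow_zero m n k Hkm Hkn (m + n - 2 * k).+1 (ltnSn _).
elim=> [|l IH] Hl; first by rewrite subn0 addn0 expr0 mul1r.
have := Z (m - l)%N (n - k + l)%N.+1.
rewrite fpowS tfE; [|lia|lia].
rewrite ifT; last lia.
rewrite /= => H.
have -> : (m - l.+1 = (m - l).-1)%N by lia.
rewrite addnS.
rewrite (_ : fpow_phi m n k (m + n - 2 * k)%N (m - l)%N.-1 (n - k + l)%N.+1 =
  - fpow_phi m n k (m + n - 2 * k)%N (m - l)%N (n - k + l)%N).
  by rewrite IH ?exprS; [ring|lia].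
by apply/eqP; rewrite -addr_eq0 H.
Qed.

Lemma diag m n k : (k <= m)%N -> (k <= n)%N ->
  Bf m n (phimnk m n k) (fpow_phi m n k (m + n - 2 * k)%N) = (-1) ^+ k * Dmnk m n k.
Proof.
move=> Hkm Hkn.
have := red_phi m n k (fun i j => fpow_phi m n k (m + n - 2 * k)%N (m - i)%N (n - j)%N) Hkm Hkn.
rewrite /Bf /= => ->.
rewrite (eq_bigr (fun l : 'I_k.+1 => ('C((m - k) + (k - l), k - l) * 'C((n - k) + l, l))%N%:R *
   ((-1) ^+ k * 'C(m + n - 2 * k, m - k)%:R))); last first.
  move=> l _; have Hl : (l <= k)%N by rewrite -ltnS.
  rewrite phival // (_ : (n - (k - l) = n - k + l)%N); last lia.
  rewrite alt // psi0 //.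
  have -> : (m - k + (k - l) = m - l)%N by lia.
  by rewrite mulrACA sign2 mul1r.
rewrite -big_distrl /= -natr_sum Hsum /Dmnk.
have -> : (m - k + (n - k) + k + 1 = m + n - k + 1)%N by lia.
rewrite natrM; ring.
Qed.

Lemma partA m n k k' p :
  (k <= minn m n)%N -> (k' <= minn m n)%N ->
  (maxn k k' <= p)%N -> (p <= m + n - maxn k k')%N ->
  \sum_(i < m.+1) \sum_(j < n.+1 | (i + j == p)%N)
     cmnk m n k i j * cmnk m n k' (m - i)%N (n - j)%N
  = (-1) ^+ k * (k == k')%:R * Dmnk m n k.
Proof.
move=> Hk Hk' Hp1 Hp2.
have Hkm : (k <= m)%N by lia.
have Hkn : (k <= n)%N by lia.
have Hkm' : (k' <= m)%N by lia.
have Hkn' : (k' <= n)%N by lia.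
have -> : \sum_(i < m.+1) \sum_(j < n.+1 | (i + j == p)%N)
     cmnk m n k i j * cmnk m n k' (m - i)%N (n - j)%N =
  Bf m n (fpow_phi m n k (p - k)) (fpow_phi m n k' (m + n - p - k')).
  rewrite /Bf; apply: eq_bigr => i _; rewrite big_mkcond; apply: eq_bigr => j _ /=.
  have Hi := ltn_ord i; have Hj := ltn_ord j.
  case: ifP => [/eqP Hp|Hp].
    rewrite /cmnk; congr (fpow_phi m n k _ i j * fpow_phi m n k' _ _ _); lia.
  rewrite fpow_lev ?mul0r //; lia.
rewrite /fpow_phi Bf_iter -iterD.
set N := (p - k + (m + n - p - k'))%N.
case: (ltngtP k k') => Hkk.
- have Z := fpow_zero m n k' Hkm' Hkn' N; rewrite /fpow_phi in Z.
  rewrite mulr0 mul0r /Bf big1 // => i _; rewrite big1 // => j _.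
  by rewrite Z ?mulr0 //; lia.
- have Z := fpow_zero m n k Hkm Hkn N; rewrite /fpow_phi in Z.
  rewrite -Bf_iter mulr0 mul0r /Bf big1 // => i _; rewrite big1 // => j _.
  by rewrite Z ?mul0r //; lia.
- subst k'; rewrite mulr1.
  have -> : N = (m + n - 2 * k)%N by rewrite /N; lia.
  exact: diag.
Qed.

Lemma partB m n (C : nat -> nat -> nat -> rat) : is_CG m n C ->
   forall i j i' j' p : nat,
     (i <= m)%N -> (j <= n)%N -> (i' <= m)%N -> (j' <= n)%N ->
     (i + j)%N = p -> (i' + j')%N = p ->
     \sum_(k < (minn m n).+1 | (k <= p <= m + n - k)%N)
        (-1) ^+ k * C k (m - i)%N (n - j)%N * C k i' j' * Dmnk m n k
     = (i == i')%:R * (j == j')%:R.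
Proof.
move=> HC i j i' j' p Hi Hj Hi' Hj' Hp Hp'.
set K := fun k : 'I_(minn m n).+1 => (k <= p <= m + n - k)%N.
pose a k := C k (m - i)%N (n - j)%N.
pose b k := C k i' j'.
transitivity (\sum_(k < (minn m n).+1 | K k) \sum_(k' < (minn m n).+1 | K k')
   \sum_(i2 < m.+1) \sum_(j2 < n.+1 | (i2 + j2 == p)%N)
     (a k * cmnk m n k (m - i2)%N (n - j2)%N) * (b k' * cmnk m n k' i2 j2)).
  apply: eq_bigr => k Kk.
  transitivity (\sum_(k' < (minn m n).+1 | K k') a k * b k' *
     ((-1) ^+ k' * (nat_of_ord k' == nat_of_ord k)%:R * Dmnk m n k')).
    rewrite (bigD1 k) //= big1 ?addr0.
      rewrite eqxx /a /b /= mulr1; ring.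
    move=> k' /andP [_ Hne].
    have -> : (nat_of_ord k' == nat_of_ord k) = false by apply/negbTE: Hne.
    by rewrite mulr0 mul0r mulr0.
  apply: eq_bigr => k' Kk'.
  have Hk := ltn_ord k; have Hk' := ltn_ord k'.
  rewrite /K in Kk Kk'.
  rewrite -(partA m n k' k p); [|lia|lia|lia|lia].
  rewrite big_distrr; apply: eq_bigr => i2 _; rewrite big_distrr; apply: eq_bigr => j2 _ /=.
  ring.
under eq_bigr => k _ do rewrite exchange_big.
rewrite exchange_big.
under eq_bigr => i2 _ do under eq_bigr => k _ do rewrite exchange_big.
under eq_bigr => i2 _ do rewrite exchange_big.
transitivity (\sum_(i2 < m.+1) \sum_(j2 < n.+1 | (i2 + j2 == p)%N)
   (((m - i2 == m - i)%N && (n - j2 == n - j)%N)%:R : rat) * ((nat_of_ord i2 == i') && (nat_of_ord j2 == j'))%:R).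
  apply: eq_bigr => i2 _; apply: eq_bigr => j2 /eqP Hz.
  have Hi2 := ltn_ord i2; have Hj2 := ltn_ord j2.
  rewrite (HC (m - i)%N (n - j)%N (leq_subr _ _) (leq_subr _ _) (m - i2)%N (n - j2)%N (leq_subr _ _) (leq_subr _ _)).
  rewrite (HC i' j' Hi' Hj' i2 j2); [|lia|lia].
  rewrite [RHS]big_distrl /=; apply: eq_big => [k|k _].
    by rewrite /K; apply/idP/idP => /andP [? ?]; apply/andP; split; lia.
  rewrite big_distrr /=; apply: eq_big => [k'|k' _].
    by rewrite /K; apply/idP/idP => /andP [? ?]; apply/andP; split; lia.
  rewrite /a /b /cmnk.
  congr (C _ _ _ * fpow_phi m n k _ _ _ * (_ * fpow_phi m n k' _ _ _)); lia.
rewrite (@pick_ord m.+1 i' (fun i2 => \sum_(j2 < n.+1 | (i2 + j2)%N == p)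
   (((m - i2)%N == (m - i)%N) && ((n - j2)%N == (n - j)%N))%:R *
   ((i2 == i') && (nat_of_ord j2 == j'))%:R)); last first.
    move=> i2 Hne; apply: big1 => j2 _; by rewrite (negbTE Hne) /= mulr0.
  by rewrite ltnS.
rewrite big_mkcond (@pick_ord n.+1 j' (fun j2 => if (i' + j2)%N == p then
   (((m - i')%N == (m - i)%N) && ((n - j2)%N == (n - j)%N))%:R *
   ((i' == i') && (j2 == j'))%:R else 0)); last first.
    by move=> j2 Hne; rewrite (negbTE Hne) andbF mulr0; case: ifP.
  by rewrite ltnS.
rewrite ifT; last by apply/eqP.
have E1 : ((m - i')%N == (m - i)%N) = (i == i') by apply/idP/idP => /eqP ?; apply/eqP; lia.
have E2 : ((n - j')%N == (n - j)%N) = (j == j') by apply/idP/idP => /eqP ?; apply/eqP; lia.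
rewrite E1 E2 !eqxx /=.
by case: (i == i'); case: (j == j'); rewrite /= ?mul1r ?mul0r ?mulr0 ?mulr1.
Qed.

Theorem corollary4p11 (m n : nat) :
  (forall k k' p : nat,
     (k <= minn m n)%N -> (k' <= minn m n)%N ->
     (maxn k k' <= p)%N -> (p <= m + n - maxn k k')%N ->
     \sum_(i < m.+1) \sum_(j < n.+1 | (i + j == p)%N)
        cmnk m n k i j * cmnk m n k' (m - i)%N (n - j)%N
     = (-1) ^+ k * (k == k')%:R * Dmnk m n k)
  /\
  (forall C : nat -> nat -> nat -> rat, is_CG m n C ->
   forall i j i' j' p : nat,
     (i <= m)%N -> (j <= n)%N -> (i' <= m)%N -> (j' <= n)%N ->
     (i + j)%N = p -> (i' + j')%N = p ->
     \sum_(k < (minn m n).+1 | (k <= p <= m + n - k)%N)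
        (-1) ^+ k * C k (m - i)%N (n - j)%N * C k i' j' * Dmnk m n k
     = (i == i')%:R * (j == j')%:R).
Proof.
split; [exact: partA | exact: partB].
Qed.
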